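(* Let $G=(V,E)$ be a temporal graph, $s\in V$, $t_s\in\mathbb{R}$, and let $T$ be either the DFS tree produced by DFS-v1 or the BFS tree produced by temporal BFS, on $G$ from $s$ with starting time $t_s$. For a vertex $v\neq s$, let $O(v)$ be the set of occurrences of $v$ in $T$. If $O(v)\neq\emptyset$, let $v_{\min}\in O(v)$ have minimal time value $\sigma$ among the occurrences in $O(v)$; then the sequence of tree edges on the path from the root to $v_{\min}$ in $T$ is a foremost path from $s$ to $v$, i.e. it is a temporal path from $s$ to $v$ starting at or after $t_s$ and its end time $t_{end}$ is at most $t_{end}(P')$ for every temporal path $P'$ from $s$ to $v$ starting at or after $t_s$. If $O(v)=\emptyset$, then there is no temporal path from $s$ to $v$ starting at or after $t_s$.
   Context: A temporal graph is a pair $G=(V,E)$ where $V$ is a finite set of vertices and $E$ is a finite set of temporal edges, i.e. triples $(u,v,t)$ with $u,v\in V$, $u\neq v$, $t\in\mathbb{R}$ (the time at which the edge is active); distinct elements of $E$ are distinct triples. A temporal path from $x$ to $y$ (starting at or after $t_s$) is a sequence $P=\langle (w_1,w_2,t_1),\dots,(w_k,w_{k+1},t_k)\rangle$ of $k\ge1$ edges of $E$ with $w_1=x$, $w_{k+1}=y$ and $t_s\le t_1\le t_2\le\dots\le t_k$; $t_{start}(P)=t_1$, $t_{end}(P)=t_k$. Temporal DFS-v1. The procedure maintains a value $\sigma(x)\in\mathbb{R}\cup\{\infty\}$ for every $x\in V$, initially $\infty$, and a set of already traversed edges, initially empty, and builds a rooted tree $T$ whose nodes are occurrences of vertices of $G$.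 Each occurrence carries a time value $\sigma$, namely the value assigned to $\sigma(x)$ when that occurrence was created. Start: create the root occurrence of $s$, set $\sigma(s)=t_s$, and make it current. Step (a): let $u$ be the vertex of the current occurrence, $\sigma_u$ its time value, and $A$ the set of edges $(u,v,t)\in E$ not yet traversed with $\sigma_u\le t$. If $A=\emptyset$: if the current occurrence is the root, terminate; otherwise make its parent current and repeat step (a). If $A\neq\emptyset$, choose any vertex $v$ such that $A$ contains an edge to $v$, select the edge $e=(u,v,t)$ of $A$ to $v$ with smallest $t$, mark it traversed and go to step (b). Step (b): if the current value $\sigma(v)>t$, create a new occurrence of $v$ as a child of the current occurrence joined by the tree edge $e$, set $\sigma(v):=t$ (its time value), make it current and go to (a); otherwise go to (a) with the same current occurrence. Temporal BFS. Records are tuples $(x,d,\tau,p)$ (vertex $x$, level $d$, time $\tau$, predecessor record $p$ or none); every record ever created is an occurrence (node) of the BFS tree $T$, rooted at the initial record, with a tree edge from the predecessor record to the record; the level and time of an occurrence are the final values of its fields. For each $x\in V$ a current value $\sigma(x)$ is kept, initially $\infty$, and set to $\tau$ whenever a record of $x$ is created or its time is updated to $\tau$. Initially the FIFO queue $Q$ contains only $(s,0,t_s,\text{none})$ and $\sigma(s)=t_s$; no edge is traversed. While $Q\neq\emptyset$: pop the front record $R=(u,d_u,\sigma_u,p_u)$; let $B$ be the set of edges $(u,v,t)\in E$ not yet traversed with $\sigma_u\le t$; for each vertex $v$ such that $B$ contains an edge to $v$ (in any order), let $e=(u,v,t)$ be the edge of $B$ to $v$ with smallest $t$, mark $e$ traversed,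 and: (i) if $Q$ contains no record of $v$ and $\sigma(v)>t$, create $(v,d_u+1,t,R)$ and append it to $Q$; (ii) if $Q$ contains a record of $v$ with level $d_u+1$ and $\sigma(v)>t$, set that record's time to $t$ and predecessor to $R$; (iii) if $Q$ contains a record of $v$ but none with level $d_u+1$, and $\sigma(v)>t$, create $(v,d_u+1,t,R)$ and append it to $Q$. *)

(* Defs.v *)
From Stdlib Require Import Reals List Relations.
Import ListNotations.
Open Scope R_scope.

Definition edge (V : Type) : Type := (V * V * R)%type.

Section TemporalGraphs.
Context {V : Type}.

Definition esrc (e : edge V) : V := fst (fst e).
Definition etgt (e : edge V) : V := snd (fst e).
Definition etime (e : edge V) : R := snd e.

Definition temporal_graph (E : list (edge V)) : Prop :=
  NoDup E /\ forall e, In e E -> esrc e <> etgt e.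

Inductive tpath (E : list (edge V)) : V -> R -> list (edge V) -> V -> Prop :=
| tpath_one x y t t0 :
    In (x, y, t) E -> t0 <= t -> tpath E x t0 [(x, y, t)] y
| tpath_cons x w y t t0 P :
    In (x, w, t) E -> t0 <= t -> tpath E w t P y ->
    tpath E x t0 ((x, w, t) :: P) y.

Definition temporal_path (E : list (edge V)) (x y : V) (ts : R)
  (P : list (edge V)) : Prop := tpath E x ts P y.

Definition t_end (P : list (edge V)) : R :=
  match rev P with e :: _ => etime e | [] => 0 end.

Definition foremost_path (E : list (edge V)) (x y : V) (ts : R)
  (P : list (edge V)) : Prop :=
  temporal_path E x y ts P /\
  forall P', temporal_path E x y ts P' -> t_end P <= t_end P'.

(** Occurrences (tree nodes): vertex, time value, and (parent index, tree edge)
    or None for the root. A tree is the list of all occurrences ever created. *)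
Record occ := mkOcc { ovtx : V; otime : R; oparent : option (nat * edge V) }.

Inductive root_path (T : list occ) : nat -> list (edge V) -> Prop :=
| rp_root i o :
    nth_error T i = Some o -> oparent o = None -> root_path T i []
| rp_step i o p e P :
    nth_error T i = Some o -> oparent o = Some (p, e) ->
    root_path T p P -> root_path T i (P ++ [e]).

(** Values in R ∪ {∞}: None = ∞.  [gt_ext x t] means x > t. *)
Definition gt_ext (x : option R) (t : R) : Prop :=
  match x with None => True | Some y => t < y end.

Definition upd_spec (f f' : V -> option R) (v : V) (t : R) : Prop :=
  f' v = Some t /\ forall x, x <> v -> f' x = f x.

Record dfs_state := mkDfs {
  d_sigma : V -> option R;
  d_trav  : list (edge V);
  d_occs  : list occ;
  d_cur   : nat }.

Definition in_A (E : list (edge V)) (st : dfs_state) (u : V) (su : R)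
  (e : edge V) : Prop :=
  In e E /\ ~ In e (d_trav st) /\ esrc e = u /\ su <= etime e.

Inductive dfs_step (E : list (edge V)) : dfs_state -> dfs_state -> Prop :=
| dfs_back st o p e0 :
    nth_error (d_occs st) (d_cur st) = Some o ->
    (forall e, ~ in_A E st (ovtx o) (otime o) e) ->
    oparent o = Some (p, e0) ->
    dfs_step E st (mkDfs (d_sigma st) (d_trav st) (d_occs st) p)
| dfs_adv_new st o v t sig' :
    nth_error (d_occs st) (d_cur st) = Some o ->
    in_A E st (ovtx o) (otime o) (ovtx o, v, t) ->
    (forall t', in_A E st (ovtx o) (otime o) (ovtx o, v, t') -> t <= t') ->
    gt_ext (d_sigma st v) t ->
    upd_spec (d_sigma st) sig' v t ->
    dfs_step E st
      (mkDfs sig' ((ovtx o, v, t) :: d_trav st)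
         (d_occs st ++ [mkOcc v t (Some (d_cur st, (ovtx o, v, t)))])
         (length (d_occs st)))
| dfs_adv_old st o v t :
    nth_error (d_occs st) (d_cur st) = Some o ->
    in_A E st (ovtx o) (otime o) (ovtx o, v, t) ->
    (forall t', in_A E st (ovtx o) (otime o) (ovtx o, v, t') -> t <= t') ->
    ~ gt_ext (d_sigma st v) t ->
    dfs_step E st
      (mkDfs (d_sigma st) ((ovtx o, v, t) :: d_trav st) (d_occs st) (d_cur st)).

Definition dfs_init (s : V) (ts : R) (st : dfs_state) : Prop :=
  upd_spec (fun _ => None) (d_sigma st) s ts /\ d_trav st = [] /\
  d_occs st = [mkOcc s ts None] /\ d_cur st = 0%nat.

Definition dfs_terminal (E : list (edge V)) (st : dfs_state) : Prop :=
  exists o, nth_error (d_occs st) (d_cur st) = Some o /\ oparent o = None /\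
            forall e, ~ in_A E st (ovtx o) (otime o) e.

Definition dfs_tree (E : list (edge V)) (s : V) (ts : R) (T : list occ) : Prop :=
  exists st0 st, dfs_init s ts st0 /\ clos_refl_trans _ (dfs_step E) st0 st /\
                 dfs_terminal E st /\ d_occs st = T.

(** Records: (occurrence, level).  The queue holds record indices.
    b_cur = Some (r, snap, done): record r has been popped, snap is the set of
    traversed edges at pop time (so B is computed at pop time), done is the
    list of target vertices already handled in this pop. *)
Record bfs_state := mkBfs {
  b_sigma : V -> option R;
  b_trav  : list (edge V);
  b_recs  : list (occ * nat);
  b_queue : list nat;
  b_cur   : option (nat * list (edge V) * list V) }.

Definition in_B (E : list (edge V)) (snap : list (edge V)) (u : V) (su : R)
  (e : edge V) : Prop :=
  In e E /\ ~ In e snap /\ esrc e = u /\ su <= etime e.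

Definition inQ_lvl (st : bfs_state) (v : V) (d : nat) (i : nat) : Prop :=
  In i (b_queue st) /\
  exists o, nth_error (b_recs st) i = Some (o, d) /\ ovtx o = v.

Definition set_nth_list {A : Type} (l : list A) (i : nat) (x : A) : list A :=
  firstn i l ++ [x] ++ skipn (S i) l.

Inductive bfs_step (E : list (edge V)) : bfs_state -> bfs_state -> Prop :=
| bfs_pop st r q :
    b_cur st = None -> b_queue st = r :: q ->
    bfs_step E st (mkBfs (b_sigma st) (b_trav st) (b_recs st) q
                         (Some (r, b_trav st, [])))
| bfs_finish st r snap done o d :
    b_cur st = Some (r, snap, done) ->
    nth_error (b_recs st) r = Some (o, d) ->
    (forall e, in_B E snap (ovtx o) (otime o) e -> In (etgt e) done) ->
    bfs_step E st (mkBfs (b_sigma st) (b_trav st) (b_recs st) (b_queue st) None)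
| bfs_create st r snap done o d v t sig' :
    (* cases (i) and (iii): no record of v with level d+1 in Q *)
    b_cur st = Some (r, snap, done) ->
    nth_error (b_recs st) r = Some (o, d) ->
    ~ In v done ->
    in_B E snap (ovtx o) (otime o) (ovtx o, v, t) ->
    (forall t', in_B E snap (ovtx o) (otime o) (ovtx o, v, t') -> t <= t') ->
    gt_ext (b_sigma st v) t ->
    ~ (exists i, inQ_lvl st v (S d) i) ->
    upd_spec (b_sigma st) sig' v t ->
    bfs_step E st
      (mkBfs sig' ((ovtx o, v, t) :: b_trav st)
         (b_recs st ++ [(mkOcc v t (Some (r, (ovtx o, v, t))), S d)])
         (b_queue st ++ [length (b_recs st)])
         (Some (r, snap, v :: done)))
| bfs_update st r snap done o d v t sig' i :
    b_cur st = Some (r, snap, done) ->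
    nth_error (b_recs st) r = Some (o, d) ->
    ~ In v done ->
    in_B E snap (ovtx o) (otime o) (ovtx o, v, t) ->
    (forall t', in_B E snap (ovtx o) (otime o) (ovtx o, v, t') -> t <= t') ->
    gt_ext (b_sigma st v) t ->
    inQ_lvl st v (S d) i ->
    upd_spec (b_sigma st) sig' v t ->
    bfs_step E st
      (mkBfs sig' ((ovtx o, v, t) :: b_trav st)
         (set_nth_list (b_recs st) i (mkOcc v t (Some (r, (ovtx o, v, t))), S d))
         (b_queue st)
         (Some (r, snap, v :: done)))
| bfs_skip st r snap done o d v t :
    b_cur st = Some (r, snap, done) ->
    nth_error (b_recs st) r = Some (o, d) ->
    ~ In v done ->
    in_B E snap (ovtx o) (otime o) (ovtx o, v, t) ->
    (forall t', in_B E snap (ovtx o) (otime o) (ovtx o, v, t') -> t <= t') ->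
    ~ gt_ext (b_sigma st v) t ->
    bfs_step E st
      (mkBfs (b_sigma st) ((ovtx o, v, t) :: b_trav st) (b_recs st)
         (b_queue st) (Some (r, snap, v :: done))).

Definition bfs_init (s : V) (ts : R) (st : bfs_state) : Prop :=
  upd_spec (fun _ => None) (b_sigma st) s ts /\ b_trav st = [] /\
  b_recs st = [(mkOcc s ts None, 0%nat)] /\ b_queue st = [0%nat] /\
  b_cur st = None.

Definition bfs_terminal (st : bfs_state) : Prop :=
  b_queue st = [] /\ b_cur st = None.

Definition bfs_tree (E : list (edge V)) (s : V) (ts : R) (T : list occ) : Prop :=
  exists st0 st, bfs_init s ts st0 /\ clos_refl_trans _ (bfs_step E) st0 st /\
                 bfs_terminal st /\ map fst (b_recs st) = T.

End TemporalGraphs.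

(* Main.v *)
Require Import Defs.
From Stdlib Require Import Reals List Relations Lia Lra Classical Arith.
Import ListNotations.
Open Scope R_scope.

Definition bnd {V} (sg : V -> option R) (x : V) (t : R) : Prop :=
  exists b, sg x = Some b /\ b <= t.

Definition TI {V} (E : list (edge V)) (s : V) (ts : R) (T : list (@occ V)) : Prop :=
  forall i o, nth_error T i = Some o ->
   (oparent o = None /\ ovtx o = s /\ otime o = ts) \/
   (exists p e op, oparent o = Some (p, e) /\ (p < i)%nat /\ nth_error T p = Some op /\
      e = (ovtx op, ovtx o, otime o) /\ In e E /\ otime op <= otime o).

Lemma tpath_nonempty {V} (E : list (edge V)) x t0 P y : tpath E x t0 P y -> P <> [].
Proof. intros H; inversion H; discriminate. Qed.

Lemma t_end_cons {V} (e : edge V) P : P <> [] -> t_end (e :: P) = t_end P.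
Proof.
  intros H. unfold t_end. simpl. destruct (rev P) eqn:Hr.
  - apply (f_equal (@rev _)) in Hr. rewrite rev_involutive in Hr. subst. now destruct H.
  - reflexivity.
Qed.

Lemma t_end_app {V} (e : edge V) P : t_end (P ++ [e]) = etime e.
Proof. unfold t_end. rewrite rev_app_distr. reflexivity. Qed.

Lemma tpath_app {V} (E : list (edge V)) x t0 P y :
  tpath E x t0 P y -> forall z t, In (y, z, t) E -> t_end P <= t ->
  tpath E x t0 (P ++ [(y, z, t)]) z.
Proof.
  induction 1; intros z t1 Hin Hle.
  - simpl. apply tpath_cons; auto. apply tpath_one; auto.
  - simpl. apply tpath_cons; auto. apply IHtpath; auto.
    pose proof (t_end_cons (x,w,t) P (tpath_nonempty _ _ _ _ _ H1)) as Ht; cbv [edge] in Ht; lra.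
Qed.

Lemma rp_exists {V} (E : list (edge V)) s ts T : TI E s ts T ->
  forall i o, nth_error T i = Some o -> exists P, root_path T i P.
Proof.
  intros HT i. induction i as [i IH] using lt_wf_ind.
  intros o Ho. destruct (HT i o Ho) as [[Hp _]|(p & e & op & Hp & Hlt & Hop & _)].
  - exists []. econstructor; eauto.
  - destruct (IH p Hlt op Hop) as [P HP]. exists (P ++ [e]). econstructor; eauto.
Qed.

Lemma rp_sound {V} (E : list (edge V)) s ts T : TI E s ts T ->
  forall i P, root_path T i P -> forall o, nth_error T i = Some o ->
  (P = [] /\ ovtx o = s /\ otime o = ts) \/ (tpath E s ts P (ovtx o) /\ t_end P = otime o).
Proof.
  intros HT i P H. induction H; intros o' Ho'.
  - rewrite H in Ho'. injection Ho' as <-. left.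
    destruct (HT i o H) as [[_ [A B]]|(p & e & op & Hp & _)]; [auto|congruence].
  - rewrite H in Ho'. injection Ho' as <-. right.
    destruct (HT i o H) as [[Hp _]|(p' & e' & op & Hp & Hlt & Hop & He & HinE & Hle)]; [congruence|].
    rewrite H0 in Hp. injection Hp as <- <-.
    rewrite t_end_app. subst e. split; [|reflexivity].
    destruct (IHroot_path op Hop) as [[-> [A B]]|[A B]].
    + simpl. rewrite A. rewrite A in HinE. apply tpath_one; auto. lra.
    + apply tpath_app; auto. lra.
Qed.

Lemma path_bound {V} (E : list (edge V)) (sg : V -> option R) :
  (forall e, In e E -> forall a, sg (esrc e) = Some a -> a <= etime e -> bnd sg (etgt e) (etime e)) ->
  forall x t0 P y, tpath E x t0 P y -> forall a, sg x = Some a -> a <= t0 -> bnd sg y (t_end P).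
Proof.
  intros HC x t0 P y H. induction H; intros a Ha Hle.
  - unfold t_end; simpl. apply (HC _ H a); simpl; auto. lra.
  - destruct (HC _ H a Ha) as [b [Hb Hbl]]; simpl; [lra|].
    pose proof (t_end_cons (x,w,t) P (tpath_nonempty _ _ _ _ _ H1)) as Ht; cbv [edge] in *; rewrite Ht. eapply IHtpath; eauto.
Qed.

Lemma final_thm {V} (E : list (edge V)) s ts (T : list (@occ V)) (sg : V -> option R) :
  TI E s ts T -> bnd sg s ts ->
  (forall x a, sg x = Some a -> exists j o, nth_error T j = Some o /\ ovtx o = x /\ otime o = a) ->
  (forall e, In e E -> forall a, sg (esrc e) = Some a -> a <= etime e -> bnd sg (etgt e) (etime e)) ->
  forall v, v <> s ->
  (forall i o, nth_error T i = Some o -> ovtx o = v ->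
     (forall j o', nth_error T j = Some o' -> ovtx o' = v -> otime o <= otime o') ->
     (exists P, root_path T i P) /\
     (forall P, root_path T i P -> foremost_path E s v ts P))
  /\
  ((forall i o, nth_error T i = Some o -> ovtx o <> v) ->
     forall P, ~ temporal_path E s v ts P).
Proof.
  intros HT [a0 [Hs0 Hs0l]] HB HC v Hv. split.
  - intros i o Ho Hov Hmin. split; [eapply rp_exists; eauto|].
    intros P HP. destruct (rp_sound E s ts T HT i P HP o Ho) as [[_ [A _]]|[A B]].
    + congruence.
    + rewrite Hov in A. split; [exact A|].
      intros P' HP'. destruct (path_bound E sg HC _ _ _ _ HP' a0 Hs0 Hs0l) as [b [Hb Hbl]].
      destruct (HB _ _ Hb) as (j & o' & Hj & Hj1 & Hj2).
      specialize (Hmin j o' Hj Hj1). lra.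
  - intros Hno P HP. destruct (path_bound E sg HC _ _ _ _ HP a0 Hs0 Hs0l) as [b [Hb Hbl]].
    destruct (HB _ _ Hb) as (j & o' & Hj & Hj1 & Hj2). exact (Hno j o' Hj Hj1).
Qed.

Lemma upd_mono {V} (sg sg' : V -> option R) v t :
  upd_spec sg sg' v t -> gt_ext (sg v) t -> forall x t0, bnd sg x t0 -> bnd sg' x t0.
Proof.
  intros [H1 H2] Hg x t0 [b [Hb Hbl]].
  destruct (classic (x = v)) as [->|Hne].
  - rewrite Hb in Hg. simpl in Hg. exists t. split; auto. lra.
  - exists b. rewrite H2; auto.
Qed.

Lemma not_gt_bound {V} (sg : V -> option R) v t : ~ gt_ext (sg v) t -> bnd sg v t.
Proof.
  intros H. unfold gt_ext in H. destruct (sg v) as [y|] eqn:E.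
  - exists y. split; auto. lra.
  - exfalso; apply H; exact I.
Qed.

Lemma upd_bound {V} (sg sg' : V -> option R) v t : upd_spec sg sg' v t -> bnd sg' v t.
Proof. intros [H _]. exists t. split; auto. lra. Qed.

Lemma nth_app_old {A} (l : list A) x i y : nth_error l i = Some y -> nth_error (l ++ [x]) i = Some y.
Proof. intros H. rewrite nth_error_app1; auto. apply nth_error_Some. congruence. Qed.

Lemma nth_app_new {A} (l : list A) x : nth_error (l ++ [x]) (length l) = Some x.
Proof. rewrite nth_error_app2 by lia. rewrite Nat.sub_diag. reflexivity. Qed.

Lemma nth_app_inv {A} (l : list A) x i y : nth_error (l ++ [x]) i = Some y ->
  nth_error l i = Some y \/ (i = length l /\ y = x).
Proof.
  intros H. destruct (Nat.lt_ge_cases i (length l)).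
  - left. rewrite nth_error_app1 in H; auto.
  - right. rewrite nth_error_app2 in H by lia.
    destruct (i - length l)%nat eqn:E; simpl in H.
    + split; [lia|congruence].
    + destruct n; discriminate.
Qed.

Inductive anc {V} (T : list (@occ V)) : nat -> nat -> Prop :=
| anc_refl i : anc T i i
| anc_step i j p e oj : anc T i p -> nth_error T j = Some oj -> oparent oj = Some (p, e) -> anc T i j.

Lemma anc_app {V} (T : list (@occ V)) x i j : anc T i j -> anc (T ++ [x]) i j.
Proof. induction 1; [constructor|]. eapply anc_step; eauto using nth_app_old. Qed.

Definition finD {V} (E : list (edge V)) (st : @dfs_state V) (i : nat) : Prop :=
  forall o, nth_error (d_occs st) i = Some o -> forall e, In e E -> esrc e = ovtx o ->
    otime o <= etime e -> bnd (d_sigma st) (etgt e) (etime e).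

Definition InvD {V} (E : list (edge V)) s ts (st : @dfs_state V) : Prop :=
  TI E s ts (d_occs st) /\ bnd (d_sigma st) s ts /\
  (forall x a, d_sigma st x = Some a -> exists j o, nth_error (d_occs st) j = Some o /\ ovtx o = x /\ otime o = a) /\
  (forall e, In e (d_trav st) -> bnd (d_sigma st) (etgt e) (etime e)) /\
  (forall i, (i < length (d_occs st))%nat -> anc (d_occs st) i (d_cur st) \/ finD E st i).

Lemma InvD_init {V} (E : list (edge V)) s ts st : dfs_init s ts st -> InvD E s ts st.
Proof.
  intros [[Hs Hsx] [Htr [Hocc Hcur]]]. destruct st as [sg tr oc cur]; simpl in *; subst.
  split; [|split; [|split; [|split]]].
  - intros i o Ho. destruct i as [|[|i]]; simpl in Ho; try discriminate.
    injection Ho as <-. left; simpl; auto.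
  - exists ts. split; auto. lra.
  - intros x a Ha. destruct (classic (x = s)) as [->|Hne].
    + exists 0%nat, (mkOcc s ts None). simpl in *. rewrite Hs in Ha. injection Ha as <-. auto.
    + rewrite Hsx in Ha; auto. discriminate.
  - intros e [].
  - intros i Hi. simpl in Hi. left. assert (i = 0%nat) by lia. subst; constructor.
Qed.

Lemma InvD_step {V} (E : list (edge V)) s ts st st' : dfs_step E st st' -> InvD E s ts st -> InvD E s ts st'.
Proof.
  intros Hst [HTI [HS [HB [HTr HStat]]]]. destruct Hst.
  -
    repeat split; simpl; auto.
    intros i Hi. destruct (HStat i Hi) as [Ha|Hf]; [|right; exact Hf].
    inversion Ha; subst.
    + right. intros o' Ho' e He1 He2 He3. simpl in Ho'; rewrite H in Ho'. injection Ho' as <-.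
      destruct (classic (In e (d_trav st))) as [Hin|Hnin].
      * apply HTr; auto.
      * exfalso. apply (H0 e). repeat split; auto.
    + left. rewrite H in H3. injection H3 as <-. rewrite H1 in H4. injection H4 as <- <-. auto.
  -
    destruct H0 as [HinE [Hntr [Hsrc Hle]]].
    pose proof (nth_error_Some (d_occs st) (d_cur st)) as Hlen.
    assert (Hcl : (d_cur st < length (d_occs st))%nat) by (apply Hlen; congruence).
    split; [|split; [|split; [|split]]]; simpl.
    + intros i o' Ho'. apply nth_app_inv in Ho'. destruct Ho' as [Ho'|[-> ->]].
      * destruct (HTI i o' Ho') as [A|(p & e & op & A1 & A2 & A3 & A4 & A5 & A6)]; [left; auto|right].
        exists p, e, op. repeat split; auto. apply nth_app_old; auto.
      * right. exists (d_cur st), (ovtx o, v, t), o. simpl. repeat split; auto. apply nth_app_old; auto.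
    + eapply upd_mono; eauto.
    + intros x a Ha. destruct (classic (x = v)) as [->|Hne].
      * destruct H3 as [H3 _]. rewrite H3 in Ha. injection Ha as <-.
        exists (length (d_occs st)), (mkOcc v t (Some (d_cur st, (ovtx o, v, t)))).
        split; [apply nth_app_new|simpl; auto].
      * destruct H3 as [_ H3]. rewrite H3 in Ha; auto. destruct (HB x a Ha) as (j & oj & A & B & C).
        exists j, oj. split; auto. apply nth_app_old; auto.
    + intros e [<-|He].
      * simpl. eapply upd_bound; eauto.
      * eapply upd_mono; eauto.
    + intros i Hi. rewrite length_app in Hi. simpl in Hi.
      destruct (Nat.eq_dec i (length (d_occs st))) as [->|Hne].
      * left. constructor.
      * destruct (HStat i ltac:(lia)) as [Ha|Hf].
        -- left. eapply anc_step; [apply anc_app; exact Ha|apply nth_app_new|reflexivity].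
        -- right. intros o' Ho' e He1 He2 He3.
           simpl in Ho'; rewrite nth_error_app1 in Ho' by lia. eapply upd_mono; eauto.
  -
    split; [|split; [|split; [|split]]]; simpl; auto.
    intros e [<-|He]; auto. simpl. apply not_gt_bound; auto.
Qed.

Lemma InvD_run {V} (E : list (edge V)) s ts st st' : clos_refl_trans _ (dfs_step E) st st' -> InvD E s ts st -> InvD E s ts st'.
Proof. induction 1; eauto using InvD_step. Qed.

Lemma dfs_final {V} (E : list (edge V)) s ts T : dfs_tree E s ts T ->
  exists sg, TI E s ts T /\ bnd sg s ts /\
  (forall x a, sg x = Some a -> exists j o, nth_error T j = Some o /\ ovtx o = x /\ otime o = a) /\
  (forall e, In e E -> forall a, sg (esrc e) = Some a -> a <= etime e -> bnd sg (etgt e) (etime e)).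
Proof.
  intros (st0 & st & Hi & Hr & Ht & <-).
  destruct (InvD_run E s ts _ _ Hr (InvD_init E s ts _ Hi)) as [HTI [HS [HB [HTr HStat]]]].
  destruct Ht as (o & Ho & Hp & HA).
  exists (d_sigma st). repeat split; auto.
  intros e HinE a Ha Hle. destruct (HB _ _ Ha) as (j & oj & Hj & Hj1 & Hj2).
  assert (Hjl : (j < length (d_occs st))%nat) by (apply nth_error_Some; congruence).
  destruct (HStat j Hjl) as [Hanc|Hf].
  - inversion Hanc; subst.
    + rewrite Ho in Hj. injection Hj as <-.
      destruct (classic (In e (d_trav st))) as [Hin|Hnin].
      * apply HTr; auto.
      * exfalso. apply (HA e). repeat split; auto.
    + rewrite Ho in H0. injection H0 as <-. congruence.
  - apply (Hf oj Hj e HinE); auto. lra.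
Qed.

Lemma set_nth_spec {A} (l : list A) i x j : (i < length l)%nat ->
  nth_error (set_nth_list l i x) j = if Nat.eq_dec j i then Some x else nth_error l j.
Proof.
  unfold set_nth_list. revert i j. induction l as [|a l IH]; intros i j Hi; simpl in Hi; [lia|].
  destruct i as [|i]; destruct j as [|j].
  - reflexivity.
  - change (nth_error (x :: l) (S j) = (if Nat.eq_dec (S j) 0 then Some x else nth_error (a :: l) (S j))).
    destruct (Nat.eq_dec (S j) 0); [lia|]. reflexivity.
  - reflexivity.
  - change (nth_error (firstn i l ++ [x] ++ skipn (S i) l) j = (if Nat.eq_dec (S j) (S i) then Some x else nth_error l j)).
    rewrite (IH i j ltac:(lia)).
    destruct (Nat.eq_dec j i), (Nat.eq_dec (S j) (S i)); auto; lia.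
Qed.

Lemma set_nth_length {A} (l : list A) i x : (i < length l)%nat -> length (set_nth_list l i x) = length l.
Proof.
  unfold set_nth_list. revert i. induction l as [|a l IH]; intros i Hi; simpl in Hi; [lia|].
  destruct i; simpl; auto. specialize (IH i ltac:(lia)). simpl in IH. rewrite IH. reflexivity.
Qed.

Definition TIr {V} (E : list (edge V)) (s : V) (ts : R) (T : list (@occ V * nat)) : Prop :=
  forall i o d, nth_error T i = Some (o, d) ->
   (oparent o = None /\ ovtx o = s /\ otime o = ts) \/
   (exists p e op dp, oparent o = Some (p, e) /\ (p < i)%nat /\ nth_error T p = Some (op, dp) /\
      e = (ovtx op, ovtx o, otime o) /\ In e E /\ otime op <= otime o).

Definition finB {V} (E : list (edge V)) (st : @bfs_state V) (i : nat) : Prop :=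
  forall o d, nth_error (b_recs st) i = Some (o, d) -> forall e, In e E -> esrc e = ovtx o ->
    otime o <= etime e -> bnd (b_sigma st) (etgt e) (etime e).

Definition InvB {V} (E : list (edge V)) s ts (st : @bfs_state V) : Prop :=
  exists h, b_queue st = seq h (length (b_recs st) - h) /\ (h <= length (b_recs st))%nat /\
  TIr E s ts (b_recs st) /\
  (forall j o d p e, nth_error (b_recs st) j = Some (o, d) -> oparent o = Some (p, e) -> (p < h)%nat) /\
  bnd (b_sigma st) s ts /\
  (forall x a, b_sigma st x = Some a -> exists j o d, nth_error (b_recs st) j = Some (o, d) /\ ovtx o = x /\ otime o = a) /\
  (forall e, In e (b_trav st) -> bnd (b_sigma st) (etgt e) (etime e)) /\
  (forall i, (i < h)%nat -> (exists snap done, b_cur st = Some (i, snap, done)) \/ finB E st i) /\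
  (forall r snap done, b_cur st = Some (r, snap, done) -> (r < h)%nat /\ incl snap (b_trav st) /\
     exists o d, nth_error (b_recs st) r = Some (o, d) /\
     forall e, In e E -> ~ In e snap -> esrc e = ovtx o -> otime o <= etime e -> In (etgt e) done ->
       bnd (b_sigma st) (etgt e) (etime e)).

Lemma InvB_init {V} (E : list (edge V)) s ts st : bfs_init s ts st -> InvB E s ts st.
Proof.
  intros [[Hs Hsx] [Htr [Hrec [Hq Hcur]]]]. destruct st as [sg tr rc q cur]; simpl in *; subst.
  exists 0%nat. simpl. split; [reflexivity|]. split; [lia|].
  split; [|split; [|split; [|split; [|split; [|split]]]]].
  - intros i o d Ho. destruct i as [|[|i]]; simpl in Ho; try discriminate.
    injection Ho as <- <-. left; simpl; auto.
  - intros j o d p e Hj Hp. destruct j as [|[|j]]; simpl in Hj; try discriminate.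
    injection Hj as <- <-. discriminate.
  - exists ts. split; auto. lra.
  - intros x a Ha. destruct (classic (x = s)) as [->|Hne].
    + exists 0%nat, (mkOcc s ts None), 0%nat. simpl. rewrite Hs in Ha. injection Ha as <-. auto.
    + rewrite Hsx in Ha; auto. discriminate.
  - intros e [].
  - intros i Hi. lia.
  - intros r snap done H; discriminate.
Qed.

Lemma bnd_same_or {V} (sg sg' : V -> option R) :
  (forall x, sg' x = sg x) -> forall x t, bnd sg x t -> bnd sg' x t.
Proof. intros H x t [b [Hb Hl]]. exists b. rewrite H. auto. Qed.

Lemma InvB_step {V} (E : list (edge V)) s ts st st' : bfs_step E st st' -> InvB E s ts st -> InvB E s ts st'.
Proof.
  intros Hst (h & Hq & Hh & HTI & HPL & HS & HB & HTr & HStat & HCur). destruct Hst.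
  -
    rewrite H0 in Hq. destruct (length (b_recs st) - h)%nat as [|m] eqn:Em; simpl in Hq; [discriminate|].
    injection Hq as -> ->.
    exists (S h). simpl. split; [f_equal; lia|]. split; [lia|].
    split; [auto|]. split; [intros; eapply HPL in H1; eauto; lia|].
    split; [auto|]. split; [auto|]. split; [auto|]. split.
    + intros i Hi. destruct (Nat.eq_dec i h) as [->|Hne].
      * left. eauto.
      * destruct (HStat i ltac:(lia)) as [[sn [dn Hc]]|Hf]; [congruence|right; exact Hf].
    + intros r snap done Hc. injection Hc as <- <- <-. split; [lia|]. split; [intros x; auto|].
      destruct (nth_error (b_recs st) h) as [[o d]|] eqn:Eo.
      * exists o, d. split; auto. intros e _ _ _ _ [].
      * apply nth_error_None in Eo. lia.
  -
    exists h. simpl. split; auto. split; auto. split; auto. split; auto. split; auto. split; auto.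
    split; auto. split.
    + intros i Hi. destruct (HStat i Hi) as [[sn [dn Hc]]|Hf]; [|right; exact Hf].
      right. rewrite H in Hc. injection Hc as -> -> ->.
      destruct (HCur _ _ _ H) as (_ & Hincl & o' & d' & Ho' & Hb).
      rewrite H0 in Ho'. injection Ho' as <- <-.
      intros o' d' Ho'' e He1 He2 He3. simpl in Ho''. rewrite H0 in Ho''. injection Ho'' as <- <-.
      destruct (classic (In e sn)) as [Hin|Hnin].
      * apply HTr. apply Hincl. auto.
      * apply Hb; auto. apply H1. repeat split; auto.
    + intros ? ? ? Hc. discriminate.
  -
    destruct (HCur _ _ _ H) as (Hrh & Hincl & o' & d' & Ho' & Hb).
    rewrite H0 in Ho'. injection Ho' as <- <-.
    destruct H2 as [HinE [Hnsn [Hsrc Hle]]].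
    assert (Hrl : (r < length (b_recs st))%nat) by (apply nth_error_Some; congruence).
    exists h. simpl. rewrite length_app. simpl.
    split; [rewrite Hq; replace (length (b_recs st) + 1 - h)%nat with (S (length (b_recs st) - h)) by lia;
            rewrite seq_S; f_equal; f_equal; lia|].
    split; [lia|].
    split; [|split; [|split; [|split; [|split; [|split]]]]].
    + intros i o' d' Ho'. apply nth_app_inv in Ho'. destruct Ho' as [Ho'|[-> Hx]].
      * destruct (HTI i o' d' Ho') as [A|(p & e & op & dp & A1 & A2 & A3 & A4 & A5 & A6)]; [left; auto|right].
        exists p, e, op, dp. repeat split; auto. apply nth_app_old; auto.
      * injection Hx as -> ->. right. exists r, (ovtx o, v, t), o, d. simpl. repeat split; auto; try lia.
        all: apply nth_app_old; auto.
    + intros j o' d' p e Hj Hp. apply nth_app_inv in Hj. destruct Hj as [Hj|[-> Hx]].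
      * eauto.
      * injection Hx as -> ->. simpl in Hp. injection Hp as <- <-. auto.
    + eapply upd_mono; eauto.
    + intros x a Ha. destruct (classic (x = v)) as [->|Hne].
      * destruct H6 as [H6 _]. rewrite H6 in Ha. injection Ha as <-.
        eexists (length (b_recs st)), _, _. split; [apply nth_app_new|simpl; auto].
      * destruct H6 as [_ H6]. rewrite H6 in Ha; auto. destruct (HB x a Ha) as (j & oj & dj & A & B & C).
        exists j, oj, dj. split; auto. apply nth_app_old; auto.
    + intros e [<-|He].
      * simpl. eapply upd_bound; eauto.
      * eapply upd_mono; eauto.
    + intros i Hi. destruct (HStat i Hi) as [[sn [dn Hc]]|Hf].
      * left. rewrite H in Hc. injection Hc as -> -> ->. eauto.
      * right. intros o' d' Ho' e He1 He2 He3. simpl in Ho'.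
        assert (nth_error (b_recs st) i = Some (o', d')).
        { apply nth_app_inv in Ho'. destruct Ho' as [Ho'|[-> _]]; auto. lia. }
        eapply upd_mono; eauto.
    + intros r' snap' done' Hc. injection Hc as <- <- <-. split; auto. split.
      * intros x Hx; right; auto.
      * exists o, d. split; [apply nth_app_old; auto|].
        intros e He1 He2 He3 He4 [He5|He5].
        -- destruct e as [[a b] c]. unfold esrc, etgt, etime in *. simpl in *. subst a b.
           assert (t <= c) by (apply H3; repeat split; auto).
           destruct H6 as [H6 _]. exists t. split; auto.
        -- eapply upd_mono; eauto.
  -
    destruct (HCur _ _ _ H) as (Hrh & Hincl & o' & d' & Ho' & Hb).
    rewrite H0 in Ho'. injection Ho' as <- <-.
    destruct H2 as [HinE [Hnsn [Hsrc Hle]]].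
    destruct H5 as [Hiq (oi & Hoi & Hoiv)].
    assert (Hil : (i < length (b_recs st))%nat) by (apply nth_error_Some; congruence).
    assert (Hhi : (h <= i)%nat) by (rewrite Hq in Hiq; apply in_seq in Hiq; lia).
    assert (Hnth : forall j, nth_error (set_nth_list (b_recs st) i (mkOcc v t (Some (r, (ovtx o, v, t))), S d)) j
       = if Nat.eq_dec j i then Some (mkOcc v t (Some (r, (ovtx o, v, t))), S d) else nth_error (b_recs st) j)
      by (intros; apply set_nth_spec; auto).
    exists h. simpl. rewrite set_nth_length by auto.
    split; [auto|]. split; [lia|].
    split; [|split; [|split; [|split; [|split; [|split]]]]].
    + intros j o' d' Ho'. rewrite Hnth in Ho'. destruct (Nat.eq_dec j i) as [->|Hne].
      * injection Ho' as <- <-. right. exists r, (ovtx o, v, t), o, d. simpl. repeat split; auto; [lia|].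
        rewrite Hnth. destruct (Nat.eq_dec r i); [lia|auto].
      * destruct (HTI j o' d' Ho') as [A|(p & e & op & dp & A1 & A2 & A3 & A4 & A5 & A6)]; [left; auto|right].
        exists p, e, op, dp. repeat split; auto. rewrite Hnth.
        destruct (Nat.eq_dec p i); [|auto]. pose proof (HPL _ _ _ _ _ Ho' A1). lia.
    + intros j o' d' p e Hj Hp. rewrite Hnth in Hj. destruct (Nat.eq_dec j i).
      * injection Hj as <- <-. simpl in Hp. injection Hp as <- <-. auto.
      * eauto.
    + eapply upd_mono; eauto.
    + intros x a Ha. destruct (classic (x = v)) as [->|Hne].
      * destruct H6 as [H6 _]. rewrite H6 in Ha. injection Ha as <-.
        exists i. eexists _, _. rewrite Hnth. destruct (Nat.eq_dec i i); [|lia]. simpl. auto.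
      * destruct H6 as [_ H6]. rewrite H6 in Ha; auto. destruct (HB x a Ha) as (j & oj & dj & A & B & C).
        exists j, oj, dj. rewrite Hnth. destruct (Nat.eq_dec j i) as [->|]; [|auto].
        rewrite Hoi in A. injection A as <- <-. congruence.
    + intros e [<-|He].
      * simpl. eapply upd_bound; eauto.
      * eapply upd_mono; eauto.
    + intros i' Hi'. destruct (HStat i' Hi') as [[sn [dn Hc]]|Hf].
      * left. rewrite H in Hc. injection Hc as -> -> ->. eauto.
      * right. intros o' d' Ho' e He1 He2 He3. simpl in Ho'. rewrite Hnth in Ho'.
        destruct (Nat.eq_dec i' i); [lia|]. eapply upd_mono; eauto.
    + intros r' snap' done' Hc. injection Hc as <- <- <-. split; auto. split.
      * intros x Hx; right; auto.
      * exists o, d. split; [rewrite Hnth; destruct (Nat.eq_dec r i); [lia|auto]|].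
        intros e He1 He2 He3 He4 [He5|He5].
        -- destruct e as [[a b] c]. unfold esrc, etgt, etime in *. simpl in *. subst a b.
           assert (t <= c) by (apply H3; repeat split; auto).
           destruct H6 as [H6 _]. exists t. split; auto.
        -- eapply upd_mono; eauto.
  -
    destruct (HCur _ _ _ H) as (Hrh & Hincl & o' & d' & Ho' & Hb).
    rewrite H0 in Ho'. injection Ho' as <- <-.
    exists h. simpl. split; auto. split; auto. split; auto. split; auto. split; auto. split; auto.
    split; [intros e [<-|He]; [apply not_gt_bound; auto|auto]|].
    split.
    + intros i Hi. destruct (HStat i Hi) as [[sn [dn Hc]]|Hf].
      * left. rewrite H in Hc. injection Hc as -> -> ->. eauto.
      * right. exact Hf.
    + intros r' snap' done' Hc. injection Hc as <- <- <-. split; auto. split.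
      * intros x Hx; right; auto.
      * exists o, d. split; auto.
        intros e He1 He2 He3 He4 [He5|He5].
        -- destruct e as [[a b] c]. unfold esrc, etgt, etime in *. simpl in *. subst a b.
           assert (t <= c) by (apply H3; repeat split; auto).
           destruct (not_gt_bound _ _ _ H4) as [y [Hy Hyl]]. exists y. split; auto. lra.
        -- apply Hb; auto.
Qed.

Lemma InvB_run {V} (E : list (edge V)) s ts st st' : clos_refl_trans _ (bfs_step E) st st' -> InvB E s ts st -> InvB E s ts st'.
Proof. induction 1; eauto using InvB_step. Qed.

Lemma nth_map_fst {A B} (l : list (A * B)) i o :
  nth_error (map fst l) i = Some o -> exists d, nth_error l i = Some (o, d).
Proof.
  intros H. rewrite nth_error_map in H. destruct (nth_error l i) as [[a b]|]; simpl in H; [|discriminate].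
  injection H as <-. eauto.
Qed.

Lemma map_fst_nth {A B} (l : list (A * B)) i o d :
  nth_error l i = Some (o, d) -> nth_error (map fst l) i = Some o.
Proof. intros H. rewrite nth_error_map, H. reflexivity. Qed.

Lemma bfs_final {V} (E : list (edge V)) s ts T : bfs_tree E s ts T ->
  exists sg, TI E s ts T /\ bnd sg s ts /\
  (forall x a, sg x = Some a -> exists j o, nth_error T j = Some o /\ ovtx o = x /\ otime o = a) /\
  (forall e, In e E -> forall a, sg (esrc e) = Some a -> a <= etime e -> bnd sg (etgt e) (etime e)).
Proof.
  intros (st0 & st & Hi & Hr & [Htq Htc] & <-).
  destruct (InvB_run E s ts _ _ Hr (InvB_init E s ts _ Hi))
    as (h & Hq & Hh & HTI & HPL & HS & HB & HTr & HStat & HCur).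
  rewrite Htq in Hq. destruct (length (b_recs st) - h)%nat eqn:Em; simpl in Hq; [|discriminate].
  exists (b_sigma st). split; [|split; [|split]]; auto.
  - intros i o Ho. apply nth_map_fst in Ho. destruct Ho as [d Ho].
    destruct (HTI i o d Ho) as [A|(p & e & op & dp & A1 & A2 & A3 & A4 & A5 & A6)]; [left; auto|right].
    exists p, e, op. repeat split; auto. eapply map_fst_nth; eauto.
  - intros x a Ha. destruct (HB x a Ha) as (j & o & d & A & B & C). exists j, o. split; auto.
    eapply map_fst_nth; eauto.
  - intros e HinE a Ha Hle. destruct (HB _ _ Ha) as (j & oj & dj & Hj & Hj1 & Hj2).
    assert (Hjl : (j < length (b_recs st))%nat) by (apply nth_error_Some; congruence).
    destruct (HStat j ltac:(lia)) as [[sn [dn Hc]]|Hf]; [congruence|].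
    apply (Hf oj dj Hj e HinE); auto. lra.
Qed.

Theorem mainTheorem8 (V : Type) (HV : exists l : list V, forall x, In x l)
  (E : list (edge V)) (HE : temporal_graph E) (s : V) (ts : R)
  (T : list (@occ V)) (HT : dfs_tree E s ts T \/ bfs_tree E s ts T)
  (v : V) (Hv : v <> s) :
  (forall i o, nth_error T i = Some o -> ovtx o = v ->
     (forall j o', nth_error T j = Some o' -> ovtx o' = v -> otime o <= otime o') ->
     (exists P, root_path T i P) /\
     (forall P, root_path T i P -> foremost_path E s v ts P))
  /\
  ((forall i o, nth_error T i = Some o -> ovtx o <> v) ->
     forall P, ~ temporal_path E s v ts P).
Proof.
  assert (Hf : exists sg, TI E s ts T /\ bnd sg s ts /\
    (forall x a, sg x = Some a -> exists j o, nth_error T j = Some o /\ ovtx o = x /\ otime o = a) /\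
    (forall e, In e E -> forall a, sg (esrc e) = Some a -> a <= etime e -> bnd sg (etgt e) (etime e))).
  { destruct HT as [H|H]; [apply dfs_final|apply bfs_final]; exact H. }
  destruct Hf as (sg & H1 & H2 & H3 & H4).
  exact (final_thm E s ts T sg H1 H2 H3 H4 v Hv).
Qed.
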